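(* Let $T>0$, let $f:(0,T)\to\mathbb{R}$ be nondecreasing and $g:(0,T)\to\mathbb{R}$ be of bounded variation, both left-continuous and bounded, with $f\ge g$ on $(0,T)$, and suppose there is $C>0$ such that: (i) for every $\varepsilon>0$, every $t$ with $f(t)>g(t)+\varepsilon$ and every $t'$ with $0\le t'-t<\varepsilon/C$, $f(t')=f(t)$ and $f(t')>g(t')$; (ii) $f(t^+)-f(t)=[g(t^+)-g(t)]^+$ for all $t$; (iii) $g(t_2)-g(t_1)\le C(t_2-t_1)$ for all $t_1<t_2$ in $[a,b)$ whenever $[a,b)\subset\{f>g\}$. Then for every $[a,b)\subset(0,T)$, $$(\partial_tg)^+([a,b))\le f(b)-f(a)+C\,\mathcal{L}^1([a,b)\cap\{f>g\}).$$
   Context: $(\partial_tg)^+$ is the positive part of the distributional derivative of $g$; for left-continuous $g$, $(\partial_tg)^+([a,b))=\sup\{\sum_{i=1}^m(g(t_i)-g(t_{i-1}))^+:a=t_0<t_1<\dots<t_m=b\}$. $h(t^+)$ denotes the right limit. *)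

(* Defs.v *)
From HB Require Import structures.
From mathcomp Require Import all_boot all_order all_algebra.
From mathcomp Require Import all_classical all_reals all_analysis.
Set Implicit Arguments. Unset Strict Implicit. Unset Printing Implicit Defensive.
Import Order.TTheory GRing.Theory Num.Theory.
Import numFieldNormedType.Exports.
Local Open Scope classical_set_scope.
Local Open Scope ring_scope.

(* Positive variation of g along a partition s of [a,b] (same conventions as
   the library's [variation]): sum of (g(t_i) - g(t_{i-1}))^+ . *)
Definition pos_variation {R : realType} (a b : R) (g : R -> R) (s : seq R) : R :=
  let G := g \o nth b (a :: s) in
  \sum_(0 <= n < size s) Num.max (G n.+1 - G n) 0.

(* (\partial_t g)^+([a,b)) for left-continuous g :
   sup over partitions a = t_0 < ... < t_m = b of sum (g t_i - g t_{i-1})^+ *)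
Definition pos_deriv_measure {R : realType} (a b : R) (g : R -> R) : \bar R :=
  ereal_sup [set (pos_variation a b g s)%:E | s in itv_partition a b].

Definition BV_open {R : realType} (T : R) (g : R -> R) : Prop :=
  exists M : R, forall a b : R, 0 < a -> a <= b -> b < T ->
    (total_variation a b g <= M%:E)%E.

Definition left_cont {R : realType} (h : R -> R) (t : R) : Prop :=
  h x @[x --> t^'-] --> h t.

Definition rlim {R : realType} (h : R -> R) (t : R) : R :=
  lim (h x @[x --> t^'+]).

(* Main.v *)
Require Import Defs.
From HB Require Import structures.
From mathcomp Require Import all_boot all_order all_algebra.
From mathcomp Require Import all_classical all_reals all_analysis.
From mathcomp Require Import lra.
Import Order.TTheory GRing.Theory Num.Theory.
Import numFieldNormedType.Exports.
Local Open Scope classical_set_scope.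
Local Open Scope ring_scope.

Lemma left_le (R : realType) (h : R -> R) (s v c : R) : s < v ->
  h x @[x --> v^'-] --> h v ->
  (forall y, s < y -> y < v -> h y <= c) -> h v <= c.
Proof.
move=> sv hc H.
have := @closed_cvg _ _ (v^'-) _ h [set x | x <= c] (@closed_le R c).
apply => //.
apply: filterS2 (nbhs_left_lt v) (nbhs_left_gt sv) => y yv sy /=.
exact: H.
Qed.

Lemma step (R : realType) (T C : R) (f g : R -> R) :
  0 < C ->
  (forall x y, 0 < x -> x <= y -> y < T -> f x <= f y) ->
  (forall t, 0 < t -> t < T -> left_cont f t) ->
  (forall t, 0 < t -> t < T -> left_cont g t) ->
  (forall t, 0 < t -> t < T -> g t <= f t) ->
  (forall (eps t t' : R), 0 < eps -> 0 < t -> t < T -> 0 < t' -> t' < T ->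
     f t > g t + eps -> 0 <= t' - t -> t' - t < eps / C ->
     f t' = f t /\ f t' > g t') ->
  (forall a b : R,
     (forall x, a <= x -> x < b -> 0 < x /\ x < T /\ g x < f x) ->
     forall t1 t2, a <= t1 -> t1 < t2 -> t2 < b ->
       g t2 - g t1 <= C * (t2 - t1)) ->
  forall s t, 0 < s -> s < t -> t < T ->
  exists u, [/\ s <= u, u <= t,
   (forall y, s <= y -> y < u -> 0 < y /\ y < T /\ g y < f y) &
   Num.max (g t - g s) 0 <= f t - f s + C * (u - s)].
Proof.
move=> C0 fmono flc glc gf Hi Hiii s t s0 st tT.
pose E := [set x | s <= x <= t /\ forall y, s <= y -> y < x -> g y < f y].
have Es : E s by split; [rewrite lexx ltW | move=> y sy ys; have := le_lt_trans sy ys; rewrite ltxx].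
have En : E !=set0 by exists s.
have Eub : ubound E t by move=> x [/andP[]].
have Ehs : has_sup E by split => //; exists t.
set u := sup E.
have su : s <= u by exact: sup_upper_bound.
have ut : u <= t by exact: ge_sup.
have Hu : forall y, s <= y -> y < u -> g y < f y.
  move=> y sy yu; have [x [_ Hx] yx] := sup_gt En yu; exact: Hx.
have HuS : forall y, s <= y -> y < u -> 0 < y /\ y < T /\ g y < f y.
  move=> y sy yu; split; first exact: lt_le_trans s0 sy.
  split; last exact: Hu.
  exact: lt_trans (lt_le_trans yu ut) tT.
have fus : f u = f s.
  pose K := [set x | s <= x <= u /\ forall y, s <= y -> y <= x -> f y = f s].
  have Ks : K s.
    split; first by rewrite lexx su.
    by move=> y sy ys; have -> : y = s by apply/eqP; rewrite eq_le ys sy.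
  have Kn : K !=set0 by exists s.
  have Kub : ubound K u by move=> x [/andP[]].
  have Khs : has_sup K by split => //; exists u.
  set v := sup K.
  have sv : s <= v by exact: sup_upper_bound.
  have vu : v <= u by exact: ge_sup.
  have Kv : forall y, s <= y -> y < v -> f y = f s.
    move=> y sy yv; have [x [_ Hx] yx] := sup_gt Kn yv; apply: Hx => //; exact: ltW.
  have fv : f v = f s.
    have [sv'|vs] := ltP s v; last first.
      by have -> : v = s by apply/eqP; rewrite eq_le vs sv.
    apply/eqP; rewrite eq_le; apply/andP; split; last first.
      by apply: fmono => //; apply: le_lt_trans tT; apply: le_trans ut.
    apply: (@left_le R f s v (f s) sv'); first by apply: flc; [exact: lt_trans sv'|apply: le_lt_trans tT; apply: le_trans ut].
    by move=> y sy yv; rewrite Kv // ltW.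
  have [vu'|uv] := ltP v u; last first.
    by have -> : u = v by apply/eqP; rewrite eq_le uv vu.
  exfalso.
  have v0 : 0 < v by exact: lt_le_trans s0 sv.
  have vT : v < T by exact: le_lt_trans (le_trans vu ut) tT.
  have gv : g v < f v by apply: Hu.
  pose eps := (f v - g v) / 2.
  have eps0 : 0 < eps by rewrite divr_gt0 // subr_gt0.
  have epsv : f v > g v + eps by rewrite /eps; lra.
  have k0 : 0 < eps / C by exact: divr_gt0.
  set k := eps / C in k0.
  pose w := Num.min u (v + k / 2).
  have vw : v < w by rewrite lt_min vu' /=; lra.
  have wu : w <= u by rewrite ge_min lexx.
  have wk : w <= v + k / 2 by rewrite ge_min lexx orbT.
  have Kw : K w.
    split; first by rewrite wu andbT; apply: le_trans sv (ltW vw).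
    move=> y sy yw; have [yv|vy] := ltP y v; first exact: Kv.
    rewrite -fv.
    have [] := Hi eps v y eps0 v0 vT (lt_le_trans v0 vy)
      (le_lt_trans (le_trans (le_trans yw wu) ut) tT) epsv => //.
    - by rewrite subr_ge0.
    - rewrite -/k; lra.
  have := sup_upper_bound Khs Kw; rewrite -/v => wv.
  by have := lt_le_trans vw wv; rewrite ltxx.
have gus : g u - g s <= C * (u - s).
  have [su'|us] := ltP s u; last first.
    have -> : u = s by apply/eqP; rewrite eq_le us su.
    by rewrite !subrr mulr0.
  have : g u <= g s + C * (u - s).
    apply: (@left_le R g s u (g s + C * (u - s)) su'); first by apply: glc; [exact: lt_trans s0 su'|exact: le_lt_trans ut tT].
    move=> y sy yu.
    have := Hiii s u HuS s y (lexx s) sy yu.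
    have : C * (y - s) <= C * (u - s) by rewrite ler_pM2l // lerD2r ltW.
    lra.
  lra.
have ft_fs : f s <= f t by apply: fmono => //; exact: ltW.
exists u; split => //.
have [ut'|tu] := ltP u t; last first.
  have tu' : t = u by apply/eqP; rewrite eq_le tu ut.
  rewrite tu' in gus ft_fs *.
  have : 0 <= C * (u - s) by apply: mulr_ge0; [exact: ltW | rewrite subr_ge0].
  rewrite ge_max; move=> h; apply/andP; split; lra.
have u0 : 0 < u by exact: lt_le_trans su.
have uT : u < T by exact: lt_trans tT.
have fgu : f u = g u.
  apply/eqP; rewrite eq_le gf // andbT; rewrite leNgt; apply/negP => gu.
  pose eps := (f u - g u) / 2.
  have eps0 : 0 < eps by rewrite divr_gt0 // subr_gt0.
  have epsu : f u > g u + eps by rewrite /eps; lra.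
  have k0 : 0 < eps / C by exact: divr_gt0.
  set k := eps / C in k0.
  pose w := Num.min t (u + k / 2).
  have uw : u < w by rewrite lt_min ut' /=; lra.
  have wt : w <= t by rewrite ge_min lexx.
  have wk : w <= u + k / 2 by rewrite ge_min lexx orbT.
  have Ew : E w.
    split; first by rewrite wt andbT; apply: le_trans su (ltW uw).
    move=> y sy yw; have [yu|uy] := ltP y u; first exact: Hu.
    have [] := Hi eps u y eps0 u0 uT (lt_le_trans u0 uy) (le_lt_trans (le_trans (ltW yw) wt) tT) epsu _ _ => //.
    - by rewrite subr_ge0.
    - rewrite -/k; lra.
  have := sup_upper_bound Ehs Ew; rewrite -/u => wu.
  by have := lt_le_trans uw wu; rewrite ltxx.
have gtft : g t <= f t by apply: gf => //; exact: lt_trans st.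
have : 0 <= C * (u - s) by apply: mulr_ge0; [exact: ltW | rewrite subr_ge0].
rewrite ge_max; move=> h; apply/andP; split; lra.
Qed.

Lemma pos_variation_cons (R : realType) (x b t : R) (g : R -> R) s :
  pos_variation x b g (t :: s) = Num.max (g t - g x) 0 + pos_variation t b g s.
Proof. by rewrite /pos_variation /= big_nat_recl. Qed.

Lemma le_leb (R : realType) (A B : set R) : A `<=` B -> (lebesgue_measure A <= lebesgue_measure B)%E.
Proof. move=> AB. rewrite /lebesgue_measure /lebesgue_stieltjes_measure /measure_extension.
exact: le_mu_ext. Qed.

Lemma lebco (R : realType) (x u : R) : x <= u -> lebesgue_measure `[x, u[%classic = (u - x)%:E.
Proof.
move=> xu; rewrite lebesgue_measure_itv /=.
rewrite lte_fin; have [_|ux] := ltP x u; first by rewrite EFinB.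
have -> : u = x by apply/eqP; rewrite eq_le ux xu.
by rewrite subrr.
Qed.

Theorem lemma7p2 (R : realType) (T C : R) (f g : R -> R) :
  0 < T -> 0 < C ->
  (* f nondecreasing on (0,T) *)
  (forall x y, 0 < x -> x <= y -> y < T -> f x <= f y) ->
  (* g of bounded variation on (0,T) *)
  BV_open T g ->
  (* left-continuity *)
  (forall t, 0 < t -> t < T -> left_cont f t) ->
  (forall t, 0 < t -> t < T -> left_cont g t) ->
  (* boundedness *)
  (exists M : R, forall t, 0 < t -> t < T -> `|f t| <= M) ->
  (exists M : R, forall t, 0 < t -> t < T -> `|g t| <= M) ->
  (* f >= g *)
  (forall t, 0 < t -> t < T -> g t <= f t) ->
  (* (i) *)
  (forall (eps t t' : R), 0 < eps -> 0 < t -> t < T -> 0 < t' -> t' < T ->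
     f t > g t + eps -> 0 <= t' - t -> t' - t < eps / C ->
     f t' = f t /\ f t' > g t') ->
  (* (ii) *)
  (forall t, 0 < t -> t < T ->
     rlim f t - f t = Num.max (rlim g t - g t) 0) ->
  (* (iii) *)
  (forall a b : R,
     (forall x, a <= x -> x < b -> 0 < x /\ x < T /\ g x < f x) ->
     forall t1 t2, a <= t1 -> t1 < t2 -> t2 < b ->
       g t2 - g t1 <= C * (t2 - t1)) ->
  (* conclusion *)
  forall a b : R, 0 < a -> a < b -> b < T ->
    (pos_deriv_measure a b g <=
     (f b - f a)%:E + C%:E * lebesgue_measure
        ([set x : R | (a <= x < b)%R] `&` [set x : R | (0 < x < T)%R /\ (g x < f x)%R]))%E.
Proof.
move=> T0 C0 fmono _ flc glc _ _ gf Hi _ Hiii a b a0 ab bT.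
set Sab := (X in lebesgue_measure X).
have key : forall s x, a <= x -> itv_partition x b s ->
  exists U r, [/\ measurable U, U `<=` Sab, lebesgue_measure U = r%:E,
     (forall y, U y -> x <= y) &
     pos_variation x b g s <= f b - f x + C * r].
  elim => [|t1 s IH] x ax.
    move=> /itv_partition_nil ->.
    exists set0, 0; split => //.
    - by rewrite measure0.
    - by rewrite /pos_variation /= big_geq // subrr mulr0 addr0.
  move=> P.
  have xt1 : x < t1 by case: P => /= /andP[].
  have P' := itv_partition_cons P.
  have t1b : t1 <= b := itv_partition_le P'.
  have [U [r [mU US mUr Ux Hr]]] := IH t1 (le_trans ax (ltW xt1)) P'.
  have x0 : 0 < x by exact: lt_le_trans a0 ax.
  have t1T : t1 < T by exact: le_lt_trans t1b bT.
  have [u [xu ut1 HS Hst]] := @step R T C f g C0 fmono flc glc gf Hi Hiii x t1 x0 xt1 t1T.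
  exists (`[x, u[%classic `|` U), ((u - x) + r); split.
  - exact: measurableU.
  - move=> y [/=|/US //]; rewrite in_itv /= => /andP[xy yu].
    have [y0 [yT gy]] := HS y xy yu.
    split => /=; first by rewrite (le_trans ax xy) /= (lt_le_trans yu (le_trans ut1 t1b)).
    by rewrite y0 yT.
  - rewrite measureU //.
    + transitivity (lebesgue_measure `[x, u[%classic + lebesgue_measure U)%E; first by []. by rewrite lebco // mUr EFinD.
    + rewrite -subset0 => y [] /=; rewrite in_itv /= => /andP[_ yu] /Ux t1y.
      by have := lt_le_trans yu (le_trans ut1 t1y); rewrite ltxx.
  - move=> y [/=|/Ux]; first by rewrite in_itv /= => /andP[].
    by move=> t1y; apply: le_trans (ltW xt1) t1y.
  - rewrite pos_variation_cons mulrDr; lra.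
apply: ge_ereal_sup => _ [s Ps <-].
have [U [r [mU US mUr _ Hr]]] := key s a (lexx a) Ps.
apply: (@le_trans _ _ ((f b - f a)%:E + C%:E * r%:E)%E).
  by rewrite -EFinM -EFinD lee_fin.
rewrite leeD2l // lee_pmul2l //. by rewrite -mUr; exact: le_leb.
Qed.
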